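(* Let $P=(N,L)$ be a random filtration pair for a random isolated invariant set $S$ of a random homeomorphism $\varphi$. Then the random pointed space map $\varphi_P(\omega,\cdot):N_L(\omega)\to N_L(\theta\omega)$ preserves base points, satisfies $[L(\omega)]\in\mathrm{int}\,\big(\varphi_P(\omega,\cdot)^{-1}([L(\theta\omega)])\big)$, $\varphi_P(\omega,\cdot)$ is continuous for each $\omega$, and $\varphi_P(\cdot,x)$ is measurable.
   Context: Let $(\Omega,\mathscr F,\mathbb P)$ be a probability space and $\theta:\Omega\to\Omega$ an invertible bimeasurable map preserving $\mathbb P$; write $\theta_n=\theta^n$. Let $(X,d_X)$ be a locally compact separable complete metric space. A random homeomorphism is a map $\varphi:\Omega\times X\to X$ with $\varphi(\cdot,x)$ measurable for every $x$ and $\varphi(\omega,\cdot)$ a homeomorphism for every $\omega$; iterates: $\varphi^n(\omega,\cdot)=\varphi(\theta_{n-1}\omega,\cdot)\circ\cdots\circ\varphi(\omega,\cdot)$ ($n>0$), $\varphi^0=\mathrm{id}_X$, $\varphi^n(\omega,\cdot)=\varphi(\theta_n\omega,\cdot)^{-1}\circ\cdots\circ\varphi(\theta_{-1}\omega,\cdot)^{-1}$ ($n<0$). A multifunction $D$ with compact values is a random compact set if $\omega\mapsto\mathrm{dist}_X(x,D(\omega))$ is measurable for each $x$. $\mathrm{Inv}A(\omega)=\{x\in A(\omega):\varphi^n(\omega,x)\in A(\theta_n\omega)\ \forall n\in\mathbb Z\}$. A random compact set $N$ is a random isolating neighborhood if $\mathrm{Inv}N(\omega)\subset\mathrm{int}N(\omega)$;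 $S$ is a random isolated invariant set if $S=\mathrm{Inv}N$ for such $N$. Exit set: $N^-(\omega)=\{x\in N(\omega):\varphi(\omega,x)\notin\mathrm{int}N(\theta\omega)\}$. A random neighborhood of $A$ in $N$ is a random set $W\subset N$ with $A(\omega)$ in the interior of $W(\omega)$ relative to $N(\omega)$. A random filtration pair for $S$ is a pair $(N,L)$ with $N$ a random isolating neighborhood, $S=\mathrm{Inv}N$, $L\subset N$ random compact, $N=\mathrm{cl}(\mathrm{int}N)$, $L=\mathrm{cl}(\mathrm{int}L)$, such that $\mathrm{cl}(N\setminus L)$ is a random isolating neighborhood of $S$ (i.e. with $\mathrm{Inv}\,\mathrm{cl}(N\setminus L)=S$), $L$ is a random neighborhood of $N^-$ in $N$, and $\varphi(\omega,L(\omega))\cap\mathrm{cl}(N(\theta\omega)\setminus L(\theta\omega))=\emptyset$. The random pointed space $N_L(\omega)$ is the quotient $N(\omega)/L(\omega)$ with the collapsed point $[L(\omega)]$ as base point (if $L(\omega)=\emptyset$, $N_L(\omega)=N(\omega)\cup\{[\emptyset]\}$ with an isolated base point); $p(\omega,\cdot):N(\omega)\to N_L(\omega)$ is the quotient map. The random pointed space map associated to $P$ is $\varphi_P(\omega,x)=[L(\theta\omega)]$ if $x=[L(\omega)]$ or $\varphi(\omega,x)\notin N(\theta\omega)$, and $\varphi_P(\omega,x)=p(\theta\omega,\varphi(\omega,x))$ otherwise. *)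

(* Defs.v *)
From HB Require Import structures.
From mathcomp Require Import all_boot all_order all_algebra.
From mathcomp Require Import all_classical all_reals all_analysis measurable_realfun.
Set Implicit Arguments.
Unset Strict Implicit.
Unset Printing Implicit Defensive.
Import Order.TTheory GRing.Theory Num.Theory.
Local Open Scope classical_set_scope.
Local Open Scope ring_scope.

Section RandomDynamics.
Context {R : realType} {d : measure_display} {Omega : measurableType d}
        {X : metricType R}.

Definition borelX (B : set X) : Prop := <<s [set U : set X | open U] >> B.

Definition measurable_to_X (f : Omega -> X) : Prop :=
  forall B, borelX B -> measurable (f @^-1` B).

(** dist_X(x, D) in the extended reals (+oo for D empty). *)
Definition distX (x : X) (D : set X) : \bar R :=
  ereal_inf [set (mdist x y)%:E | y in D].

Definition random_compact (D : Omega -> set X) : Prop :=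
  (forall w, compact (D w)) /\
  (forall x, measurable_fun [set: Omega] (fun w => distX x (D w))).

Definition thetaZ (theta thetainv : Omega -> Omega) (n : int) (w : Omega) :=
  match n with
  | Posz k => iter k theta w
  | Negz k => iter k.+1 thetainv w
  end.

Fixpoint phi_pos (theta : Omega -> Omega) (phi : Omega -> X -> X)
    (k : nat) (w : Omega) (x : X) : X :=
  match k with
  | 0 => x
  | k'.+1 => phi (iter k' theta w) (phi_pos theta phi k' w x)
  end.

(** phi^{-k} : phi(theta_{-k} w)^{-1} o ... o phi(theta_{-1} w)^{-1} *)
Fixpoint phi_neg (thetainv : Omega -> Omega) (phiinv : Omega -> X -> X)
    (k : nat) (w : Omega) (x : X) : X :=
  match k with
  | 0 => x
  | k'.+1 => phiinv (iter k'.+1 thetainv w) (phi_neg thetainv phiinv k' w x)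
  end.

Definition phiZ (theta thetainv : Omega -> Omega) (phi phiinv : Omega -> X -> X)
    (n : int) (w : Omega) (x : X) : X :=
  match n with
  | Posz k => phi_pos theta phi k w x
  | Negz k => phi_neg thetainv phiinv k.+1 w x
  end.

Definition rInv (theta thetainv : Omega -> Omega) (phi phiinv : Omega -> X -> X)
    (A : Omega -> set X) (w : Omega) : set X :=
  [set x | A w x /\ forall n : int,
     A (thetaZ theta thetainv n w) (phiZ theta thetainv phi phiinv n w x)].

Definition random_isolating_nbhd (theta thetainv : Omega -> Omega)
    (phi phiinv : Omega -> X -> X) (N : Omega -> set X) :=
  random_compact N /\
  forall w, rInv theta thetainv phi phiinv N w `<=` interior (N w).

Definition exit_set (theta : Omega -> Omega) (phi : Omega -> X -> X) (N : Omega -> set X) w : set X :=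
  [set x | N w x /\ ~ interior (N (theta w)) (phi w x)].

Definition rel_interior (N W : set X) : set X :=
  [set x | W x /\ exists U : set X, open U /\ U x /\ N `&` U `<=` W].

(** W is a random neighborhood of A in N (W is assumed to be a random set) *)
Definition random_nbhd_in (N A W : Omega -> set X) : Prop :=
  forall w, W w `<=` N w /\ A w `<=` rel_interior (N w) (W w).

Definition random_filtration_pair (theta thetainv : Omega -> Omega)
    (phi phiinv : Omega -> X -> X)
    (S N L : Omega -> set X) : Prop :=
  random_isolating_nbhd theta thetainv phi phiinv N /\
  (forall w, S w = rInv theta thetainv phi phiinv N w) /\
  (random_compact L /\ (forall w, L w `<=` N w)) /\
  (forall w, N w = closure (interior (N w)) /\ L w = closure (interior (L w))) /\
  (random_isolating_nbhd theta thetainv phi phiinv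
        (fun w => closure (N w `\` L w)) /\
      (forall w, rInv theta thetainv phi phiinv
                   (fun w => closure (N w `\` L w)) w = S w)) /\
  random_nbhd_in N (exit_set theta phi N) L /\
  (forall w, phi w @` L w `&` closure (N (theta w) `\` L (theta w)) = set0).

(** ---- The pointed quotient space N/L ----
    A point of N_L(w) is represented in [option X]: [None] is the base point
    [L(w)], and [Some x] (x in N(w) \ L(w)) is the class of x. *)
Definition pquot (L : set X) (x : X) : option X :=
  if pselect (L x) then None else Some x.

Definition NL (N L : set X) : set (option X) := [set None] `|` (pquot L @` N).

Definition rel_open (N U : set X) : Prop :=
  exists W : set X, open W /\ U = N `&` W.

(** quotient topology on N/L (with an isolated base point when L is empty) *)
Definition qopen (N L : set X) (U : set (option X)) : Prop :=
  U `<=` NL N L /\ rel_open N (N `&` (pquot L @^-1` U)).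

Definition qinterior (N L : set X) (A : set (option X)) : set (option X) :=
  [set y | exists U, qopen N L U /\ U y /\ U `<=` A].

Definition phiP (theta : Omega -> Omega) (phi : Omega -> X -> X) (N L : Omega -> set X)
    (w : Omega) (y : option X) : option X :=
  match y with
  | None => None
  | Some x => if pselect (N (theta w) (phi w x))
              then pquot (L (theta w)) (phi w x) else None
  end.

(** measurability of an (option X)-valued map, option X carrying the
    sigma-algebra generated by {None} and the Borel sets of X (via Some) *)
Definition measurable_to_optX (f : Omega -> option X) : Prop :=
  measurable [set w | f w = None] /\
  forall B, borelX B -> measurable [set w | exists2 x, f w = Some x & B x].

End RandomDynamics.

(* Main.v *)
Require Import Defs.
From mathcomp Require Import all_boot all_order all_algebra.
From mathcomp Require Import all_classical all_reals all_analysis measurable_realfun.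
Import Order.TTheory GRing.Theory Num.Theory.
Local Open Scope classical_set_scope.
Local Open Scope ring_scope.

Lemma mball_open (R : realType) (X : metricType R) (x : X) (r : R) :
  open [set y | mdist x y < r].
Proof.
rewrite openE => y /= Bxy; rewrite /interior; apply/nbhs_ballP.
exists (r - mdist x y); first by rewrite /= subr_gt0.
move=> z; rewrite ballEmdist /= => h.
rewrite (le_lt_trans (metric_triangle x y z))//.
by rewrite -ltrBrDl.
Qed.

Lemma cbigcup_meas d (T : measurableType d) (I : Type) (D : set I)
  (G : I -> set T) : countable D -> (forall i, D i -> measurable (G i)) ->
  measurable (\bigcup_(i in D) G i).
Proof.
move=> /countable_injP [f finj] mG.
have -> : \bigcup_(i in D) G i =
   \bigcup_n \bigcup_(i in D `&` [set i | f i = n]) G i.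
  apply/seteqP; split => w.
  - by move=> [i Di Gi]; exists (f i) => //; exists i.
  - by move=> [n _ [i [Di _] Gi]]; exists i.
apply: bigcupT_measurable => n.
have [[i [Di fi]]|nex] := pselect (exists i, D i /\ f i = n).
  have -> : D `&` [set i | f i = n] = [set i].
    apply/seteqP; split => j /=.
    - move=> [Dj fj]; apply: finj; rewrite ?inE //; congruence.
    - by move=> ->.
  by rewrite bigcup_set1; exact: mG.
have -> : D `&` [set i | f i = n] = set0.
  by apply/seteqP; split => j //= [Dj fj]; apply nex; exists j.
by rewrite bigcup_set0; exact: measurable0.
Qed.
Lemma mem_meas (R : realType) d (Omega : measurableType d) (X : metricType R)
  (theta : Omega -> Omega) (K : Omega -> set X) (g : Omega -> X) (D : set X) :
  measurable_fun setT theta -> random_compact K -> measurable_to_X g ->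
  countable D -> closure D = setT ->
  measurable [set w | K (theta w) (g w)].
Proof.
move=> mth [cK mK] mg cD dD.
have -> : [set w | K (theta w) (g w)] = \bigcap_n \bigcup_(x in D)
   ([set w | mdist x (g w) < n.+1%:R^-1] `&`
    [set w | (distX x (K (theta w)) < (n.+1%:R^-1)%:E)%E]).
  apply/seteqP; split => w /=.
  - move=> Kw n _.
    have : closure D (g w) by rewrite dD.
    move=> /(_ _ (nbhsx_ballx (g w) (n.+1%:R^-1) _)).
    case=> [|x [Dx]]; first by rewrite invr_gt0.
    rewrite ballEmdist /= metric_sym => hx.
    exists x => //; split => //=.
    apply: (le_lt_trans _ (_ : ((mdist x (g w))%:E < _)%E)); last by rewrite lte_fin.
    by apply: ge_ereal_inf; exists (mdist x (g w))%:E => //; exists (g w).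
  - move=> H; have cl := compact_closed (@metric_hausdorff R X) (cK (theta w)); apply: cl.
    move=> B /nbhs_ballP [e /= e0 eB].
    have e20 : 0 < e / 2 by rewrite divr_gt0.
    have [N _ /(_ N)/(_ (leqnn _)) Ne] := near_infty_natSinv_lt (PosNum e20).
    have [x Dx [/= h1 h2]] := H N I.
    have [_ [y Ky <-] hy] := ereal_inf_lt h2.
    exists y; split => //; apply: eB; rewrite ballEmdist /=.
    rewrite lte_fin in hy.
    rewrite (le_lt_trans (metric_triangle _ x _))//.
    rewrite [e](splitr e) ltrD //.
      by rewrite metric_sym (lt_trans h1).
    by rewrite (lt_trans hy).
apply: bigcapT_measurable => n; apply: cbigcup_meas => // x Dx.
apply: measurableI.
  have -> : [set w | mdist x (g w) < n.+1%:R^-1] =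
            g @^-1` [set y | mdist x y < n.+1%:R^-1] by [].
  by apply: mg; apply: sub_sigma_algebra; exact: mball_open.
rewrite -[X in measurable X]setTI.
apply: emeasurable_fun_infty_o => //.
exact: (measurableT_comp (mK x) mth).
Qed.

Lemma rel_open_of (R : realType) (X : metricType R) (A P O : set X) :
  open O -> (forall x, A x -> (P x <-> O x)) -> rel_open A (A `&` P).
Proof.
move=> oO h; exists O; split => //.
apply/seteqP; split => x [Ax Px]; split => //; exact/(h x Ax).
Qed.

Theorem mainTheorem6 (R : realType) (d : measure_display)
  (Omega : measurableType d) (P : probability Omega R)
  (theta thetainv : Omega -> Omega)
  (X : metricType R)
  (phi phiinv : Omega -> X -> X)
  (S N L : Omega -> set X) :
  cancel theta thetainv -> cancel thetainv theta ->
  measurable_fun [set: Omega] theta -> measurable_fun [set: Omega] thetainv ->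
  (forall A, measurable A -> P (theta @^-1` A) = P A) ->
  locally_compact [set: X] ->
  (exists D : set X, countable D /\ closure D = [set: X]) ->
  (forall F : set_system X, ProperFilter F -> cauchy F -> exists x : X, F --> x) ->
  (forall x, measurable_to_X (fun w => phi w x)) ->
  (forall w, cancel (phi w) (phiinv w) /\ cancel (phiinv w) (phi w)) ->
  (forall w, continuous (phi w) /\ continuous (phiinv w)) ->
  (exists N0, random_isolating_nbhd theta thetainv phi phiinv N0 /\
              forall w, S w = rInv theta thetainv phi phiinv N0 w) ->
  random_filtration_pair theta thetainv phi phiinv S N L ->
  (forall w,
     (forall y, NL (N w) (L w) y ->
        NL (N (theta w)) (L (theta w)) (phiP theta phi N L w y)) /\
     phiP theta phi N L w None = None /\
     qinterior (N w) (L w)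
       (NL (N w) (L w) `&` (phiP theta phi N L w @^-1` [set None])) None /\
     (forall V, qopen (N (theta w)) (L (theta w)) V ->
        qopen (N w) (L w) (NL (N w) (L w) `&` (phiP theta phi N L w @^-1` V)))) /\
  (forall y : option X, measurable_to_optX (fun w => phiP theta phi N L w y)).
Proof.
move=> _ _ mth _ _ _ [D [cD dD]] _ mphi _ cont _ HF.
case: HF => [[[cN mN] _] [_ [[[cL mL] LN] [_ [_ [Hnb Hdisj]]]]]].
split; last first.
  move=> [x|]; last first.
    split.
      have -> : [set w : Omega | @None X = None] = setT by apply/seteqP; split.
      exact: measurableT.
    move=> B _.
    have -> : [set w : Omega | exists2 x : X, None = Some x & B x] = set0.
      by apply/seteqP; split => w // [].
    exact: measurable0.
  have mNs : measurable [set w | N (theta w) (phi w x)].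
    exact: (@mem_meas R d Omega X theta N (fun w => phi w x) D mth (conj cN mN) (mphi x) cD dD).
  have mLs : measurable [set w | L (theta w) (phi w x)].
    exact: (@mem_meas R d Omega X theta L (fun w => phi w x) D mth (conj cL mL) (mphi x) cD dD).
  split.
    have -> : [set w | phiP theta phi N L w (Some x) = None] =
       ~` [set w | N (theta w) (phi w x)] `|` [set w | L (theta w) (phi w x)].
      apply/seteqP; split => w /=; rewrite /phiP /pquot.
      - case: pselect => h; last by left.
        by case: pselect => h2 // _; right.
      - case: pselect => h //; case: pselect => h2 //.
        by case.
    by apply: measurableU => //; exact: measurableC.
  move=> B mB.
  have -> : [set w | exists2 x0, phiP theta phi N L w (Some x) = Some x0 & B x0] =
     [set w | N (theta w) (phi w x)] `&` ~` [set w | L (theta w) (phi w x)]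
     `&` ((fun w => phi w x) @^-1` B).
    apply/seteqP; split => w /=; rewrite /phiP /pquot.
    - case: pselect => h; last by case.
      case: pselect => h2; first by case.
      by move=> [x0 [<-] Bx].
    - move=> [[h h2] Bx]; case: pselect => // h3; case: pselect => // h4.
      by exists (phi w x).
  by apply: measurableI; [apply: measurableI => //; exact: measurableC|exact: mphi].
move=> w.
set N' := N (theta w); set L' := L (theta w).
have hNc : closed N' by exact: (compact_closed (@metric_hausdorff R X) (cN _)).
set W := phi w @^-1` (~` closure (N' `\` L')).
have oW : open W.
  by apply: (proj1 (continuousP _) (cont w).1); apply: closed_openC; exact: closed_closure.
have LW : L w `<=` W.
  move=> x Lx cx.
  have : (phi w @` L w `&` closure (N (theta w) `\` L (theta w))) (phi w x).
    by split => //; exists x.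
  by rewrite Hdisj.
have key1 : forall x, W x -> N' (phi w x) -> L' (phi w x).
  move=> x Wx Nx; have [//|nL] := pselect (L' (phi w x)).
  by exfalso; apply: Wx; apply: subset_closure.
have hexit : forall x, N w x -> ~ L w x -> interior N' (phi w x).
  move=> x Nx nLx; have [//|ni] := pselect (interior N' (phi w x)).
  exfalso; apply: nLx.
  by have [_ /(_ x (conj Nx ni)) []] := Hnb w.
split.
  move=> y [->|[x Nx <-]]; first by left.
  rewrite /pquot; case: pselect => Lx; first by left.
  rewrite /phiP /=; case: pselect => h; last by left.
  by right; exists (phi w x).
split; first by [].
split.
  exists [set y | y = None \/ exists2 x, y = Some x & (N w x /\ ~ L w x /\ W x)].
  split; [split|split; first by left].
  - move=> y [->|[x -> [Nx [nLx _]]]]; first by left.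
    by right; exists x => //; rewrite /pquot; case: pselect.
  - apply: (@rel_open_of R X _ _ W oW) => x Nx /=; rewrite /pquot; case: pselect => Lx.
      by split => _; [exact: LW|left].
    split; first by case=> // -[x0 [<-] [_ [_]]].
    by move=> Wx; right; exists x.
  - move=> y [->|[x -> [Nx [nLx Wx]]]]; first by split; [left|].
    split; first by right; exists x => //; rewrite /pquot; case: pselect.
    rewrite /= /phiP /=; case: pselect => h //.
    by rewrite /pquot; case: pselect => h2 //; exfalso; apply: h2; exact: key1.
move=> V [VNL [Op [oO eqO]]].
have hO : forall z, N' z -> (V (pquot L' z) <-> Op z).
  move=> z Nz; split => h.
    have : (N' `&` Op) z by rewrite -eqO.
    by case.
  have : (N' `&` (pquot L' @^-1` V)) z by rewrite eqO.
  by case.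
split; first by move=> y [].
have NLs : forall x, N w x -> ~ L w x -> NL (N w) (L w) (Some x).
  by move=> x Nx nLx; right; exists x => //; rewrite /pquot; case: pselect.
have [VN|nVN] := pselect (V None).
  apply: (@rel_open_of R X _ _ (W `|` (phi w @^-1` Op) `|` (phi w @^-1` ~` N'))).
    apply: openU; [apply: openU => //|].
      exact: (proj1 (continuousP _) (cont w).1).
    by apply: (proj1 (continuousP _) (cont w).1); exact: closed_openC.
  move=> x Nx /=; rewrite /pquot; case: pselect => Lx.
    by split => _; [left; left; exact: LW|split; [left|]].
  rewrite /phiP /=; case: pselect => h.
    split.
      by move=> [_ /(hO _ h) Ox]; left; right.
    move=> hh; split; first exact: NLs.
    apply/(hO _ h); case: hh => [[Wx|//]|//].
    apply/(hO _ h); have := key1 _ Wx h; rewrite /pquot; case: pselect => //.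
  by split => _; [right|split => //; exact: NLs].
apply: (@rel_open_of R X _ _ (phi w @^-1` (Op `&` interior N'))).
  apply: (proj1 (continuousP _) (cont w).1); apply: openI => //.
  exact: open_interior.
move=> x Nx /=; rewrite /pquot; case: pselect => Lx.
  split; first by case.
  move=> [Ox /interior_subset Nphi].
  have := key1 _ (LW _ Lx) Nphi => L'x.
  by exfalso; apply: nVN; have := (proj2 (hO _ Nphi) Ox); rewrite /pquot; case: pselect.
rewrite /phiP /=; case: pselect => h.
  split; first by move=> [_ /(hO _ h) Ox]; split => //; exact: hexit.
  by move=> [Ox _]; split; [exact: NLs|apply/(hO _ h)].
split; first by case.
by move=> [_ /interior_subset].
Qed.
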